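(* Let $A,B\in\mathcal{B}(\mathcal{H})$. Then \begin{equation*} w\left(\begin{bmatrix} 0 &A \\ B& 0 \end{bmatrix}\right)+\frac{|w(A+B)-w(A-B)|}{2}\leq w(A)+w(B). \end{equation*}
   Context: $\mathcal{H}$ is a complex Hilbert space and $\mathcal{B}(\mathcal{H})$ is the $C^*$-algebra of all bounded linear operators on $\mathcal{H}$. For $T\in\mathcal{B}(\mathcal{H})$, $w(T)=\sup\{|\langle Tx,x\rangle|:\|x\|=1\}$ is the numerical radius. A $2\times 2$ operator matrix with entries in $\mathcal{B}(\mathcal{H})$ is regarded as an operator on $\mathcal{H}\oplus\mathcal{H}$. *)

(* Defs.v *)
From HB Require Import structures.
From mathcomp Require Import all_boot all_order all_algebra.
From mathcomp Require Import complex.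
From mathcomp Require Import classical_sets reals.
Set Implicit Arguments. Unset Strict Implicit. Unset Printing Implicit Defensive.
Import Order.TTheory GRing.Theory Num.Theory.
Local Open Scope ring_scope.
Local Open Scope classical_set_scope.

Section Hilbert.
Variable R : realType.
Local Notation C := R[i].
Variable V : lmodType C.

Definition inner_product_axioms (ip : V -> V -> C) : Prop :=
  [/\ forall (a : C) (x y z : V), ip (a *: x + y) z = a * ip x z + ip y z,
      forall x y : V, ip y x = conjc (ip x y),
      forall x : V, 0 <= ip x x
    & forall x : V, ip x x = 0 -> x = 0].

Definition hnorm (ip : V -> V -> C) (x : V) : R := Num.sqrt (complex.Re (ip x x)).

Definition hcomplete (ip : V -> V -> C) : Prop :=
  forall u : nat -> V,
    (forall e : R, 0 < e -> exists N : nat, forall m n : nat,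
        (N <= m)%N -> (N <= n)%N -> hnorm ip (u m - u n) < e) ->
    exists l : V, forall e : R, 0 < e -> exists N : nat, forall n : nat,
        (N <= n)%N -> hnorm ip (u n - l) < e.

Definition is_hilbert (ip : V -> V -> C) : Prop :=
  inner_product_axioms ip /\ hcomplete ip.

Definition bounded_op (ip : V -> V -> C) (T : V -> V) : Prop :=
  (forall (a : C) (x y : V), T (a *: x + y) = a *: T x + T y) /\
  exists M : R, forall x : V, hnorm ip (T x) <= M * hnorm ip x.

Definition numrad (ip : V -> V -> C) (T : V -> V) : R :=
  sup [set Normc.normc (ip (T x) x) | x in [set x : V | hnorm ip x = 1]].

End Hilbert.

Definition dsum_ip (R : realType) (V : lmodType R[i]) (ip : V -> V -> R[i])
  (p q : (V * V)%type) : R[i] := ip p.1 q.1 + ip p.2 q.2.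

(* the operator matrix [[0, A], [B, 0]] acting on H (+) H *)
Definition offdiag (R : realType) (V : lmodType R[i]) (A B : V -> V)
  (p : (V * V)%type) : (V * V)%type := (A p.2, B p.1).

(* Main.v *)
Require Import Defs.
From HB Require Import structures.
From mathcomp Require Import all_boot all_order all_algebra.
From mathcomp Require Import complex.
From mathcomp Require Import classical_sets reals.
From mathcomp Require Import boolp ring lra.
Set Implicit Arguments. Unset Strict Implicit.
Import Order.TTheory GRing.Theory Num.Theory.
Local Open Scope ring_scope.
Local Open Scope complex_scope.
Local Open Scope classical_set_scope.

Notation nc := Normc.normc.


Section Cplx.
Variable R : realType.
Implicit Types x y : R[i].
Lemma ReD x y : complex.Re (x + y) = complex.Re x + complex.Re y.
Proof. by case: x => a b; case: y. Qed.
Lemma ImD x y : complex.Im (x + y) = complex.Im x + complex.Im y.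
Proof. by case: x => a b; case: y. Qed.
Lemma ReM x y : complex.Re (x * y) = complex.Re x * complex.Re y - complex.Im x * complex.Im y.
Proof. by case: x => a b; case: y. Qed.
Lemma ImM x y : complex.Im (x * y) = complex.Re x * complex.Im y + complex.Im x * complex.Re y.
Proof. by case: x => a b; case: y. Qed.
Lemma ReN x : complex.Re (- x) = - complex.Re x.
Proof. by case: x. Qed.
Lemma ImN x : complex.Im (- x) = - complex.Im x.
Proof. by case: x. Qed.
Lemma ReC (r : R) : complex.Re (r%:C) = r. Proof. by []. Qed.
Lemma ImC (r : R) : complex.Im (r%:C) = 0. Proof. by []. Qed.
Lemma Re1 : complex.Re (1 : R[i]) = 1. Proof. by []. Qed.
Lemma Im1 : complex.Im (1 : R[i]) = 0. Proof. by []. Qed.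
Lemma ReJ x : complex.Re (conjc x) = complex.Re x. Proof. by case: x. Qed.
Lemma ImJ x : complex.Im (conjc x) = - complex.Im x. Proof. by case: x. Qed.
Lemma ceq x y : complex.Re x = complex.Re y -> complex.Im x = complex.Im y -> x = y.
Proof. by case: x => a b; case: y => c d /= -> ->. Qed.
Lemma nc_ge0 x : 0 <= nc x. Proof. by case: x => a b; apply: sqrtr_ge0. Qed.
Lemma nc_real (r : R) : nc (r%:C) = `|r|.
Proof. by rewrite /Normc.normc /= expr0n /= addr0 sqrtr_sqr. Qed.
Definition ii : R[i] := Complex 0 1.
Lemma nc_ii : nc ii = 1.
Proof. by rewrite /Normc.normc /= expr0n /= expr1n add0r sqrtr1. Qed.
Lemma conj_ii : conjc ii = - ii.
Proof. by apply: ceq; rewrite ?ReN ?ImN /= ?oppr0. Qed.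
Lemma ii_conj : ii * conjc ii = 1.
Proof. by apply: ceq; rewrite ?ReM ?ImM /= ?Re1 ?Im1 /=; ring. Qed.
Lemma nc_le x : nc x <= `|complex.Re x| + `|complex.Im x|.
Proof.
have -> : x = (complex.Re x)%:C + ii * (complex.Im x)%:C.
  by apply: ceq; rewrite ?ReD ?ImD ?ReM ?ImM /=; ring.
apply: le_trans (le_normcD _ _) _.
rewrite Normc.normcM nc_ii mul1r !nc_real /= !mul0r !mul1r !subr0 !addr0 add0r. 
by rewrite add0r.
Qed.
End Cplx.
Lemma c2 (R : realType) : (2%:R : R[i]) = (2%:R : R)%:C.
Proof. by apply: ceq => /=; rewrite ?addr0. Qed.
Lemma nc2 (R : realType) (w : R[i]) : nc (2%:R * w) = 2%:R * nc w.
Proof. by rewrite c2 Normc.normcM /Normc.normc /= expr0n /= addr0 sqrtr_sqr ger0_norm. Qed.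

Section Sup.
Variable R : realType.
Variable V : lmodType R[i].
Variable ip : V -> V -> R[i].

Lemma numrad_le T c : (forall x, hnorm ip x = 1 -> nc (ip (T x) x) <= c) ->
  0 <= c -> numrad ip T <= c.
Proof.
move=> h c0; rewrite /numrad.
set E := [set _ | _ in _].
case: (pselect (E !=set0)) => [ne|e].
  by apply: ge_sup => // r [x hx <-]; apply: h.
have -> : E = set0 by apply/seteqP; split=> r // Er; apply: e; exists r.
by rewrite sup0.
Qed.

Lemma numrad_ge T M x : (forall y, hnorm ip y = 1 -> nc (ip (T y) y) <= M) ->
  hnorm ip x = 1 -> nc (ip (T x) x) <= numrad ip T.
Proof.
move=> hM hx; apply: sup_upper_bound; last by exists x.
split; first by exists (nc (ip (T x) x)); exists x.
by exists M => r [y hy <-]; apply: hM.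
Qed.

Lemma numrad_ge0 T M : (forall y, hnorm ip y = 1 -> nc (ip (T y) y) <= M) ->
  0 <= numrad ip T.
Proof.
move=> hM; rewrite /numrad.
set E := [set _ | _ in _].
case: (pselect (E !=set0)) => [[r [x hx _]]|e].
  exact: le_trans (nc_ge0 _) (numrad_ge hM hx).
have -> : E = set0 by apply/seteqP; split=> r // Er; apply: e; exists r.
by rewrite sup0.
Qed.
End Sup.

Section IP.
Variable R : realType.
Variable V : lmodType R[i].
Variable ip : V -> V -> R[i].
Hypothesis ipA : inner_product_axioms ip.

Lemma ipDZl a x y z : ip (a *: x + y) z = a * ip x z + ip y z.
Proof. by case: ipA. Qed.
Lemma ipC x y : ip y x = conjc (ip x y).
Proof. by case: ipA. Qed.
Lemma ip0l z : ip 0 z = 0.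
Proof.
have := ipDZl 1 0 0 z; rewrite scale1r addr0 mul1r => h.
by apply: (addrI (ip 0 z)); rewrite addr0 -h.
Qed.
Lemma ipDl x y z : ip (x + y) z = ip x z + ip y z.
Proof. by rewrite -[x]scale1r ipDZl mul1r scale1r. Qed.
Lemma ipZl a x z : ip (a *: x) z = a * ip x z.
Proof. by rewrite -[a *: x]addr0 ipDZl ip0l addr0. Qed.
Lemma ipNl x z : ip (- x) z = - ip x z.
Proof. by rewrite -scaleN1r ipZl mulN1r. Qed.
Lemma ipBl x y z : ip (x - y) z = ip x z - ip y z.
Proof. by rewrite ipDl ipNl. Qed.
Lemma ipDr x y z : ip z (x + y) = ip z x + ip z y.
Proof. by rewrite [LHS]ipC ipDl rmorphD /= -!ipC. Qed.
Lemma ipZr a x z : ip z (a *: x) = conjc a * ip z x.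
Proof. by rewrite [LHS]ipC ipZl rmorphM /= -ipC. Qed.

Definition nsq x := complex.Re (ip x x).
Lemma ipRe x : ip x x = (nsq x)%:C.
Proof.
have := (match ipA with And4 _ _ h _ => h end) x.
rewrite /nsq; case: (ip x x) => a b; rewrite lecE /= => /andP[/eqP h _].
by rewrite h complexr0.
Qed.
Lemma nsq_ge0 x : 0 <= nsq x.
Proof. by rewrite -ler0c -ipRe; case: ipA. Qed.
Lemma nsq0 x : nsq x = 0 -> x = 0.
Proof. by move=> h; case: ipA => _ _ _; apply; rewrite ipRe h. Qed.
Lemma hnorm_nsq x : hnorm ip x = 1 <-> nsq x = 1.
Proof.
rewrite /hnorm -/(nsq x); split.
  by move=> h; rewrite -(sqr_sqrtr (nsq_ge0 x)) h expr1n.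
by move=> ->; rewrite sqrtr1.
Qed.

Definition lin (T : V -> V) := forall (a : R[i]) x y, T (a *: x + y) = a *: T x + T y.

Lemma quad T (hT : lin T) x y c :
  ip (T (x + c *: y)) (x + c *: y) =
  ip (T x) x + conjc c * ip (T x) y + c * ip (T y) x + c * conjc c * ip (T y) y.
Proof.
have TD u v : T (u + v) = T u + T v.
  have := hT 1 u v; rewrite !scale1r; done.
have T0 : T 0 = 0.
  by have := TD 0 0; rewrite addr0 => h; apply: (addrI (T 0)); rewrite addr0 -h.
have TZ a u : T (a *: u) = a *: T u by rewrite -[a *: u]addr0 hT T0 addr0.
rewrite TD TZ !ipDl !ipDr !ipZl !ipZr; ring.
Qed.

Lemma lin_id : lin id. Proof. by []. Qed.
Lemma lin0 T : lin T -> T 0 = 0.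
Proof. by move=> hT; have := hT 1 0 0; rewrite !scale1r addr0 => h; apply: (addrI (T 0)); rewrite addr0 -h. Qed.
Lemma linZ T : lin T -> forall a u, T (a *: u) = a *: T u.
Proof. by move=> hT a u; rewrite -[a *: u]addr0 hT lin0 // addr0. Qed.

Lemma quadI x y c : (nsq (x + c *: y))%:C =
  (nsq x)%:C + conjc c * ip x y + c * ip y x + c * conjc c * (nsq y)%:C.
Proof. by rewrite -!ipRe (quad lin_id). Qed.

Lemma nsqQ x y c : nsq (x + c *: y) =
  nsq x + nsq y * complex.Re (c * conjc c) + 2%:R * complex.Re (conjc c * ip x y).
Proof.
have h := congr1 (@complex.Re R) (quadI x y c).
rewrite ReC in h.
rewrite h (ipC x y) !ReD !ReM !ReJ !ImJ !ImM !ReC !ImC; ring.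
Qed.

Lemma Kbound T M (hT : lin T) (hM : forall y, hnorm ip y = 1 -> nc (ip (T y) y) <= M) z :
  nc (ip (T z) z) <= numrad ip T * nsq z.
Proof.
have := nsq_ge0 z; rewrite le_eqVlt => /orP[/eqP n0|npos].
  have z0 : z = 0 by apply: nsq0.
  by rewrite -n0 mulr0 z0 lin0 // ip0l Normc.normc0.
set t := Num.sqrt (nsq z).
have t0 : 0 < t by rewrite sqrtr_gt0.
have tt : t * t = nsq z by rewrite -expr2 sqr_sqrtr // ltW.
set a : R[i] := (t^-1)%:C.
have ca : conjc a = a by rewrite /a conjc_real.
have hz : hnorm ip (a *: z) = 1.
  apply/hnorm_nsq; apply: complexI; rewrite -ipRe ipZl ipZr ipRe ca mulrA /a -!rmorphM.
  congr (_ %:C); rewrite -tt; field; exact: lt0r_neq0.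
have := numrad_ge hM hz.
rewrite linZ // ipZl ipZr ca mulrA /a -rmorphM Normc.normcM nc_real ger0_norm; last first.
  by rewrite mulr_ge0 // invr_ge0 ltW.
move=> h.
have -> : nc (ip (T z) z) = (t^-1 * t^-1 * nc (ip (T z) z)) * nsq z.
  by rewrite -tt; field; exact: lt0r_neq0.
by apply: ler_wpM2r => //; apply: nsq_ge0.
Qed.

Lemma Sym T M (hT : lin T) (hM : forall y, hnorm ip y = 1 -> nc (ip (T y) y) <= M) x y :
  nc (ip (T x) y + ip (T y) x) <= numrad ip T * (nsq x + nsq y).
Proof.
have e : 2%:R * (ip (T x) y + ip (T y) x) =
  ip (T (x + 1 *: y)) (x + 1 *: y) - ip (T (x + (-1) *: y)) (x + (-1) *: y).
  by rewrite !quad // rmorphN1 conjc1; ring.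
have p : nsq (x + 1 *: y) + nsq (x + (-1) *: y) = 2%:R * (nsq x + nsq y).
  rewrite !nsqQ rmorphN1 conjc1 !ReM !ReN !ImN Re1 Im1; ring.
have h1 := Kbound hT hM (x + 1 *: y).
have h2 := Kbound hT hM (x + (-1) *: y).
have h3 : nc (2%:R * (ip (T x) y + ip (T y) x)) <=
   nc (ip (T (x + 1 *: y)) (x + 1 *: y)) + nc (ip (T (x + (-1) *: y)) (x + (-1) *: y)).
  by rewrite e; apply: le_trans (le_normcD _ _) _; rewrite normcN.
move: h3; rewrite nc2.
have hw : numrad ip T * nsq (x + 1 *: y) + numrad ip T * nsq (x + (-1) *: y) =
  2%:R * (numrad ip T * (nsq x + nsq y)) by rewrite -mulrDr p; ring.
lra.
Qed.

Lemma Anti T M (hT : lin T) (hM : forall y, hnorm ip y = 1 -> nc (ip (T y) y) <= M) x y :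
  nc (ip (T y) x - ip (T x) y) <= numrad ip T * (nsq x + nsq y).
Proof.
have := Sym hT hM (ii R *: x) y.
have -> : nsq (ii R *: x) = nsq x.
  by apply: complexI; rewrite -!ipRe ipZl ipZr mulrA ii_conj mul1r.
rewrite linZ // ipZl ipZr conj_ii.
have -> : ii R * ip (T x) y + - ii R * ip (T y) x = (- ii R) * (ip (T y) x - ip (T x) y) by ring.
by rewrite Normc.normcM normcN nc_ii mul1r.
Qed.

Lemma ipbound u v : nc (ip u v) <= nsq u + nsq v.
Proof.
have key d := nsq_ge0 (u + d *: v).
have k1 := key (Complex 1 0).
have k2 := key (Complex (-1) 0).
have k3 := key (Complex 0 1).
have k4 := key (Complex 0 (-1)).
move: k1 k2 k3 k4; rewrite !nsqQ !ReM !ReJ !ImJ /=.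
have := nc_le (ip u v).
set a := complex.Re (ip u v); set b := complex.Im (ip u v).
move=> hn k1 k2 k3 k4.
have hu := nsq_ge0 u; have hv := nsq_ge0 v.
have ha : `|a| <= (nsq u + nsq v) / 2%:R.
  rewrite ler_norml; apply/andP; split; lra.
have hb : `|b| <= (nsq u + nsq v) / 2%:R.
  rewrite ler_norml; apply/andP; split; lra.
lra.
Qed.

End IP.

Theorem theorem4p14 (R : realType) (V : lmodType R[i]) (ip : V -> V -> R[i])
  (HH : is_hilbert ip) (A B : V -> V)
  (hA : bounded_op ip A) (hB : bounded_op ip B) :
  numrad (dsum_ip ip) (offdiag A B)
    + `|numrad ip (fun x => A x + B x) - numrad ip (fun x => A x - B x)| / 2
  <= numrad ip A + numrad ip B.
Proof.
case: HH => ipA _.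
case: hA => lA [MA hMA]; case: hB => lB [MB hMB].
have nsq_hn x : nsq ip x = hnorm ip x ^+ 2.
  by rewrite /hnorm sqr_sqrtr // (nsq_ge0 ipA).
have ubT T (M0 : R) : (forall x, hnorm ip (T x) <= M0 * hnorm ip x) ->
    exists M, forall y, hnorm ip y = 1 -> nc (ip (T y) y) <= M.
  move=> hT; exists (M0 ^+ 2 + 1) => y hy.
  apply: le_trans (ipbound ipA _ _) _.
  have n1 : nsq ip y = 1 by apply/(hnorm_nsq ipA).
  have h := hT y; rewrite hy mulr1 in h.
  have h0 : 0 <= hnorm ip (T y) by apply: sqrtr_ge0.
  rewrite nsq_hn n1; nra.
have [MA' hA'] := ubT _ _ hMA.
have [MB' hB'] := ubT _ _ hMB.
set P := fun x => A x + B x.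
set Q := fun x => A x - B x.
have lP : lin P by move=> a x y; rewrite /P lA lB scalerDr addrACA.
have lQ : lin Q by move=> a x y; rewrite /Q lA lB scalerBr opprD addrACA.
have hP' y : hnorm ip y = 1 -> nc (ip (P y) y) <= MA' + MB'.
  move=> hy; rewrite /P (ipDl ipA); apply: le_trans (le_normcD _ _) _.
  by apply: lerD; [apply: hA'|apply: hB'].
have hQ' y : hnorm ip y = 1 -> nc (ip (Q y) y) <= MA' + MB'.
  move=> hy; rewrite /Q (ipBl ipA); apply: le_trans (le_normcD _ _) _.
  by rewrite normcN; apply: lerD; [apply: hA'|apply: hB'].
have wA0 := numrad_ge0 hA'.
have wB0 := numrad_ge0 hB'.
have wP0 := numrad_ge0 hP'.
have wQ0 := numrad_ge0 hQ'.
have wP : numrad ip P <= numrad ip A + numrad ip B.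
  apply: numrad_le; last by apply: addr_ge0.
  move=> y hy; rewrite /P (ipDl ipA); apply: le_trans (le_normcD _ _) _.
  by apply: lerD; [apply: (numrad_ge hA')|apply: (numrad_ge hB')].
have wQ : numrad ip Q <= numrad ip A + numrad ip B.
  apply: numrad_le; last by apply: addr_ge0.
  move=> y hy; rewrite /Q (ipBl ipA); apply: le_trans (le_normcD _ _) _.
  by rewrite normcN; apply: lerD; [apply: (numrad_ge hA')|apply: (numrad_ge hB')].
have wT : numrad (dsum_ip ip) (offdiag A B) <= (numrad ip P + numrad ip Q) / 2%:R.
  apply: numrad_le; last by apply: divr_ge0 => //; apply: addr_ge0.
  move=> [x y] h.
  have e : complex.Re (dsum_ip ip (x, y) (x, y)) = nsq ip x + nsq ip y.
    by rewrite /dsum_ip /= ReD.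
  rewrite /hnorm e in h.
  have n1 : nsq ip x + nsq ip y = 1.
    by rewrite -(sqr_sqrtr (addr_ge0 (nsq_ge0 ipA x) (nsq_ge0 ipA y))) h expr1n.
  rewrite /dsum_ip /offdiag /=.
  have e2 : 2%:R * (ip (A y) x + ip (B x) y) =
      (ip (P x) y + ip (P y) x) + (ip (Q y) x - ip (Q x) y).
    by rewrite /P /Q !(ipDl ipA) ?(ipBl ipA) ?(ipNl ipA); ring.
  have h1 := Sym ipA lP hP' x y.
  have h2 := Anti ipA lQ hQ' x y.
  rewrite n1 mulr1 in h1; rewrite n1 mulr1 in h2.
  have h3 : nc (2%:R * (ip (A y) x + ip (B x) y)) <=
      nc (ip (P x) y + ip (P y) x) + nc (ip (Q y) x - ip (Q x) y).
    by rewrite e2; apply: le_normcD.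
  rewrite nc2 in h3; lra.
have hn : `|numrad ip P - numrad ip Q| <=
    2%:R * (numrad ip A + numrad ip B) - numrad ip P - numrad ip Q.
  by rewrite ler_norml; apply/andP; split; lra.
rewrite -/P -/Q; lra.
Qed.
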